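(* Let $G_M$ be a maximal reducible graph, let $T_M$ be a persistent phylogeny solving $G_M$, and let $c,c'$ be overlapping characters occurring in $T_M$ and inactive in $G_M$. Then one of the following holds: (1) $T_M$ contains (in this order along a root-to-leaf path) the edges $c^+$, $c'^+$, $c^-$, $c'^-$, where $c'^-$ may be missing; (2) $T_M$ contains (in this order along a root-to-leaf path) the edges $c'^+$, $c^+$, $c'^-$, $c^-$, where $c^-$ may be missing; (3) $c^-$ and $c'^-$ appear in two distinct paths of $T_M$, and, if $c$ and $c'$ are conflicting in $G_M$, $T_M$ has a species preceding both $c^+$ and $c'^+$.
   Context: Persistent phylogeny. Let $M$ be a binary matrix with rows indexed by species $S$ and columns by characters $C=\{c_1,\dots,c_m\}$, and $A\subseteq C$ (active characters). A persistent phylogeny for $(M,A)$ is a rooted tree $T$ whose nodes $x$ carry vectors $l_x\in\{0,1\}^m$ (the state of $x$) such that: the root $r$ has $l_r[j]=1$ iff $c_j\in A$; each edge is labelled $c_j^+$ for each character changing from 0 to 1 on it and $c_j^-$ for each changing from 1 to 0; each character changes state on at most two edges, and if on two, they lie on one root-to-leaf path with the gain $c_j^+$ closer to the root than the loss $c_j^-$; each row of $M$ equals $l_x$ for some node $x$ (called a species of $T$). Edges are identified with their labels. Red-black graphs. A red-black graph on species $S$ and characters $C$ is a bipartite graph on $S\cup C$ with red or black edges, each character incident only to black edges (inactive) or only to red edges (active). Its associated matrix has $M[s,c]=1$ iff $(s,c)$ is black, or $c$ is active and $(s,c)$ is not an edge; a tree solving the graph is a persistent phylogeny for (associated matrix,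 set of active characters). $S(c)=\{s:M[s,c]=1\}$. Two characters $c,c'$ overlap if $S(c)\cap S(c')\neq\emptyset$ and neither of $S(c),S(c')$ contains the other; they are conflicting if the pairs $(M[s,c],M[s,c'])$, $s\in S$, take all four values $(0,0),(0,1),(1,0),(1,1)$. Realizing $c^+$ ($c$ inactive): with $D(c)$ the species of the component of $c$, add red edges from $c$ to $D(c)\setminus N(c)$, delete black edges on $c$ and isolated vertices; realizing $c^-$ ($c$ active, $D(c)\subseteq N(c)$): delete all edges on $c$ and isolated vertices. An active character red-adjacent to all species is free. A c-reduction $\langle c_1^+,\dots,c_k^+\rangle$ is successful if realizing the characters in order is always defined (realizing negatively each character right after it becomes free) and yields the empty graph. A red-black graph is reducible if it is connected and admits a successful reduction (i.e. is solved by some persistent phylogeny). Standing assumption: no free, null (isolated) or universal (inactive and black-adjacent to all species) characters, no species with no characters, no two identical character columns. An inactive character $c$ is maximal if no inactive $c'$ has $S(c)\subsetneq S(c')$. A maximal reducible graph is a reducible red-black graph all of whose characters are inactive and maximal. *)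

(* Defs.v *)
From mathcomp Require Import all_boot.
Set Implicit Arguments. Unset Strict Implicit. Unset Printing Implicit Defensive.

(* [rb_edge s c] : (s,c) is an edge; [rb_active c] : c is active      *)
(* (all its edges are red), otherwise inactive (all edges black).     *)
Record rbgraph (S C : finType) := RBGraph {
  rb_edge : S -> C -> bool;
  rb_active : C -> bool }.

Section RB.
Variables (S C : finType) (G : rbgraph S C).

Definition assoc_matrix (s : S) (c : C) : bool :=
  if rb_active G c then ~~ rb_edge G s c else rb_edge G s c.

Definition active_set : {set C} := [set c | rb_active G c].

Definition Sof (c : C) : {set S} := [set s | assoc_matrix s c].

Definition overlapping (c c' : C) : Prop :=
  Sof c :&: Sof c' != set0 /\ ~~ (Sof c \subset Sof c') /\ ~~ (Sof c' \subset Sof c).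

Definition conflicting (c c' : C) : Prop :=
  forall b b' : bool, exists s : S, assoc_matrix s c = b /\ assoc_matrix s c' = b'.

Definition rb_adj : rel (S + C) := fun u v =>
  match u, v with
  | inl s, inr c => rb_edge G s c
  | inr c, inl s => rb_edge G s c
  | _, _ => false
  end.

Definition rb_connected : Prop := forall u v : S + C, connect rb_adj u v.

Definition standing : Prop :=
  (* no free characters *)
  (forall c, rb_active G c -> exists s, ~~ rb_edge G s c) /\
  (forall c, exists s, rb_edge G s c) /\
  (* no universal characters *)
  (forall c, ~~ rb_active G c -> exists s, ~~ rb_edge G s c) /\
  (forall s, exists c, rb_edge G s c) /\
  (forall c c', (forall s, assoc_matrix s c = assoc_matrix s c') -> c = c').

Definition maximal_char (c : C) : Prop :=
  ~~ rb_active G c /\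
  forall c', ~~ rb_active G c' -> ~~ (Sof c \proper Sof c').

End RB.

(* is identified with its child x.                                    *)
Section Tree.
Variables (V : finType) (r : V) (par : V -> V).

Definition rooted_tree : Prop :=
  par r = r /\ (forall x, x != r -> par x != x) /\
  (forall x, exists n, iter n par x = r).

Definition anc (x y : V) : Prop := exists n, iter n par y = x.
Definition sanc (x y : V) : Prop := y != r /\ anc x (par y).

Variables (C : finType) (l : V -> {ffun C -> bool}).

Definition gain (c : C) (x : V) : bool := (x != r) && ~~ l (par x) c && l x c.
Definition loss (c : C) (x : V) : bool := (x != r) && l (par x) c && ~~ l x c.
Definition changes (c : C) (x : V) : bool := (x != r) && (l (par x) c != l x c).

Definition is_species (S : finType) (M : S -> C -> bool) (x : V) : Prop :=
  exists s, forall c, l x c = M s c.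

Definition persistent_phylogeny (S : finType) (M : S -> C -> bool) (A : {set C}) : Prop :=
  rooted_tree /\
  (forall c, l r c = (c \in A)) /\
  (forall c x y z, changes c x -> changes c y -> changes c z ->
     x = y \/ x = z \/ y = z) /\
  (forall c x y, changes c x -> changes c y -> x != y ->
     (gain c x /\ loss c y /\ sanc x y) \/ (gain c y /\ loss c x /\ sanc y x)) /\
  (forall s, exists x, forall c, l x c = M s c).

Definition occurs (c : C) : Prop := exists x, changes c x.

End Tree.

Definition solves (S C V : finType) (G : rbgraph S C) (r : V) (par : V -> V)
  (l : V -> {ffun C -> bool}) : Prop :=
  persistent_phylogeny r par l (assoc_matrix G) (active_set G).

Definition reducible (S C : finType) (G : rbgraph S C) : Prop :=
  rb_connected G /\
  exists (V : finType) (r : V) (par : V -> V) (l : V -> {ffun C -> bool}),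
    solves G r par l.

Definition maximal_reducible (S C : finType) (G : rbgraph S C) : Prop :=
  reducible G /\ (forall c, ~~ rb_active G c) /\ (forall c, maximal_char G c).

(* Main.v *)
Require Import Defs.
From mathcomp Require Import all_boot.
From Stdlib Require Import Classical ClassicalEpsilon.
Set Implicit Arguments. Unset Strict Implicit. Unset Printing Implicit Defensive.

Lemma iter_root (V : finType) (r : V) (par : V -> V) n :
  par r = r -> iter n par r = r.
Proof. by move=> Hr; elim: n => //= n ->. Qed.

Lemma tree_acyc (V : finType) (r : V) (par : V -> V) x n :
  rooted_tree r par -> 0 < n -> iter n par x = x -> x = r.
Proof.
case=> Hr [_ Hreach] n0 Hx.
have [N HN] := Hreach x.
have Hm : forall j, iter (n * j) par x = x.
  elim=> [|j IH]; first by rewrite muln0.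
  by rewrite mulnS iterD IH Hx.
have HNle : N <= n * N by rewrite leq_pmull.
rewrite -(Hm N) -(subnK HNle) iterD HN iter_root //.
Qed.

Lemma anc_refl (V : finType) (par : V -> V) x : anc par x x.
Proof. by exists 0. Qed.

Lemma anc_par (V : finType) (par : V -> V) x : anc par (par x) x.
Proof. by exists 1. Qed.

Lemma anc_trans (V : finType) (par : V -> V) a b c :
  anc par a b -> anc par b c -> anc par a c.
Proof. by case=> m Hm [n Hn]; exists (m + n); rewrite iterD Hn. Qed.

Lemma anc_iter (V : finType) (par : V -> V) i x : anc par (iter i par x) x.
Proof. by exists i. Qed.

Lemma anc_iter2 (V : finType) (par : V -> V) i j x :
  i <= j -> anc par (iter j par x) (iter i par x).
Proof. by move=> Hij; exists (j - i); rewrite -iterD subnK. Qed.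

Lemma anc_total (V : finType) (par : V -> V) a b x :
  anc par a x -> anc par b x -> anc par a b \/ anc par b a.
Proof.
case=> m <- [n <-]; case: (leqP m n) => H.
  by right; apply: anc_iter2.
by left; apply: anc_iter2; apply: ltnW.
Qed.

Lemma anc_root (V : finType) (r : V) (par : V -> V) x :
  rooted_tree r par -> anc par r x.
Proof. by case=> _ [_ H]; have [n Hn] := H x; exists n. Qed.

Lemma anc_antisym (V : finType) (r : V) (par : V -> V) a b :
  rooted_tree r par -> anc par a b -> anc par b a -> a = b.
Proof.
move=> Ht [n Hn] [m Hm].
have Hb : iter (m + n) par b = b by rewrite iterD Hn.
case: (posnP (m + n)) => H.
  by move: H => /eqP; rewrite addn_eq0 => /andP [_ /eqP n0]; rewrite n0 in Hn.
have Hbr := tree_acyc Ht H Hb.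
by rewrite -Hn Hbr iter_root //; case: Ht.
Qed.

Lemma anc_sanc (V : finType) (r : V) (par : V -> V) a b :
  rooted_tree r par -> anc par a b -> a <> b -> sanc r par a b.
Proof.
move=> Ht [n Hn] Hab; case: n Hn => [|n] Hn; first by move: Hn Hab => /= ->.
split.
  apply/eqP => Hbr; apply: Hab; rewrite -Hn Hbr iter_root //; by case: Ht.
by exists n; rewrite -iterSr.
Qed.

Lemma sanc_anc (V : finType) (r : V) (par : V -> V) a b :
  sanc r par a b -> anc par a b.
Proof. by case=> _ H; apply: anc_trans H (anc_par _ _). Qed.

Lemma sanc_neq (V : finType) (r : V) (par : V -> V) a b :
  rooted_tree r par -> sanc r par a b -> a <> b.
Proof.
move=> Ht [Hbr H] Hab; subst a.
have Hp := anc_antisym Ht H (anc_par par b).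
case: Ht => _ [Hne _]; by move: (Hne b Hbr); rewrite -Hp eqxx.
Qed.

Definition order_ax (V C : finType) (r : V) (par : V -> V) (l : V -> {ffun C -> bool}) :=
  forall c x y, changes r par l c x -> changes r par l c y -> x != y ->
     (gain r par l c x /\ loss r par l c y /\ sanc r par x y) \/
     (gain r par l c y /\ loss r par l c x /\ sanc r par y x).

Lemma first_change (V C : finType) (r : V) (par : V -> V) (l : V -> {ffun C -> bool}) k x n :
  par r = r -> l (iter n par x) k != l x k ->
  exists i, i < n /\ changes r par l k (iter i par x) /\ l (iter i par x) k = l x k.
Proof.
move=> Hr; elim: n => [|n IH]; first by rewrite eqxx.
case: (eqVneq (l (iter n par x) k) (l x k)) => Heq; last first.
  by move=> _; have [i [Hi H]] := IH Heq; exists i; split => //; apply: ltnW.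
rewrite iterS => Hne; exists n; split => //; split => //.
rewrite /changes Heq Hne andbT; apply/eqP => Hnr.
by move: Hne; rewrite Hnr Hr -Hnr Heq eqxx.
Qed.


Lemma gain_changes (V C : finType) (r : V) (par : V -> V) (l : V -> {ffun C -> bool}) k x :
  gain r par l k x -> changes r par l k x.
Proof. by rewrite /gain /changes; case: (x != r) => //=; case: (l (par x) k); case: (l x k). Qed.

Lemma loss_changes (V C : finType) (r : V) (par : V -> V) (l : V -> {ffun C -> bool}) k x :
  loss r par l k x -> changes r par l k x.
Proof. by rewrite /loss /changes; case: (x != r) => //=; case: (l (par x) k); case: (l x k). Qed.

Lemma changes_gain (V C : finType) (r : V) (par : V -> V) (l : V -> {ffun C -> bool}) k x :
  changes r par l k x -> l x k -> gain r par l k x.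
Proof. by rewrite /gain /changes; case: (x != r) => //=; case: (l (par x) k); case: (l x k). Qed.

Lemma changes_loss (V C : finType) (r : V) (par : V -> V) (l : V -> {ffun C -> bool}) k x :
  changes r par l k x -> ~~ l x k -> loss r par l k x.
Proof. by rewrite /loss /changes; case: (x != r) => //=; case: (l (par x) k); case: (l x k). Qed.

Lemma gain_loss_excl (V C : finType) (r : V) (par : V -> V) (l : V -> {ffun C -> bool}) k x :
  gain r par l k x -> loss r par l k x -> False.
Proof. by rewrite /loss /gain; case: (x != r) => //=; case: (l (par x) k); case: (l x k). Qed.

Lemma gain_uniq (V C : finType) (r : V) (par : V -> V) (l : V -> {ffun C -> bool}) k x y :
  order_ax r par l -> gain r par l k x -> gain r par l k y -> x = y.
Proof.
move=> H2 Hx Hy; case: (eqVneq x y) => // Hne.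
case: (H2 k x y (gain_changes Hx) (gain_changes Hy) Hne) => [[_ [Hl _]]|[_ [Hl _]]].
  by case: (gain_loss_excl Hy Hl).
by case: (gain_loss_excl Hx Hl).
Qed.

Lemma loss_uniq (V C : finType) (r : V) (par : V -> V) (l : V -> {ffun C -> bool}) k x y :
  order_ax r par l -> loss r par l k x -> loss r par l k y -> x = y.
Proof.
move=> H2 Hx Hy; case: (eqVneq x y) => // Hne.
case: (H2 k x y (loss_changes Hx) (loss_changes Hy) Hne) => [[Hg _]|[Hg _]].
  by case: (gain_loss_excl Hg Hx).
by case: (gain_loss_excl Hg Hy).
Qed.

Lemma gain_loss_sanc (V C : finType) (r : V) (par : V -> V) (l : V -> {ffun C -> bool}) k x y :
  order_ax r par l -> gain r par l k x -> loss r par l k y -> sanc r par x y.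
Proof.
move=> H2 Hx Hy; case: (eqVneq x y) => [Heq|Hne].
  by subst y; case: (gain_loss_excl Hx Hy).
case: (H2 k x y (gain_changes Hx) (loss_changes Hy) Hne) => [[_ [_ H]]|[Hg _]] //.
by case: (gain_loss_excl Hg Hy).
Qed.

Lemma charv1 (V C : finType) (r : V) (par : V -> V) (l : V -> {ffun C -> bool}) k x :
  rooted_tree r par -> l r k = false -> order_ax r par l -> l x k ->
  exists g, gain r par l k g /\ anc par g x /\
            forall e, loss r par l k e -> ~ anc par e x.
Proof.
move=> Ht Hr0 H2 Hx.
have Hr : par r = r by case: Ht.
have [N HN] := anc_root x Ht.
have [i [_ [Hc Hl]]] : exists i, i < N /\ changes r par l k (iter i par x) /\
    l (iter i par x) k = l x k by apply: first_change => //; rewrite HN Hr0 Hx.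
have Hg : gain r par l k (iter i par x) by apply: changes_gain => //; rewrite Hl.
exists (iter i par x); split => //; split; first exact: anc_iter.
move=> e He [m Hm].
have [i' [Hi' [Hc' Hl']]] : exists i', i' < m /\ changes r par l k (iter i' par x) /\
    l (iter i' par x) k = l x k.
  apply: first_change => //; rewrite Hm Hx.
  by move: He; rewrite /loss => /andP [_ /negbTE ->].
have Hg' : gain r par l k (iter i' par x) by apply: changes_gain => //; rewrite Hl'.
have E := gain_uniq H2 Hg Hg'.
have A1 : anc par e (iter i par x) by rewrite E -Hm; apply: anc_iter2; apply: ltnW.
have A2 := sanc_anc (gain_loss_sanc H2 Hg He).
have E2 := anc_antisym Ht A1 A2; rewrite E2 in He.
by case: (gain_loss_excl Hg He).
Qed.

Lemma below_loss (V C : finType) (r : V) (par : V -> V) (l : V -> {ffun C -> bool}) k x e :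
  rooted_tree r par -> l r k = false -> order_ax r par l ->
  loss r par l k e -> anc par e x -> l x k = false.
Proof.
move=> Ht Hr0 H2 He Hex; apply/negP => Hx.
have [g [_ [_ H]]] := charv1 Ht Hr0 H2 Hx.
exact: H He Hex.
Qed.

Lemma charv2 (V C : finType) (r : V) (par : V -> V) (l : V -> {ffun C -> bool}) k g x :
  rooted_tree r par -> gain r par l k g -> anc par g x -> ~~ l x k ->
  exists e, loss r par l k e /\ anc par e x /\ anc par g e.
Proof.
move=> Ht Hg [n Hn] Hx.
have Hr : par r = r by case: Ht.
have [i [Hi [Hc Hl]]] : exists i, i < n /\ changes r par l k (iter i par x) /\
    l (iter i par x) k = l x k.
  apply: first_change => //; rewrite Hn.
  by move: Hg Hx; rewrite /gain => /andP [_ ->]; case: (l x k).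
exists (iter i par x); split.
  by apply: changes_loss => //; rewrite Hl.
by split; [exact: anc_iter | rewrite -Hn; apply: anc_iter2; apply: ltnW].
Qed.

Lemma charv2' (V C : finType) (r : V) (par : V -> V) (l : V -> {ffun C -> bool}) k g x :
  rooted_tree r par -> gain r par l k g -> anc par g x ->
  (forall e, loss r par l k e -> ~ anc par e x) -> l x k.
Proof.
move=> Ht Hg Hgx H; apply/negPn/negP => Hx.
by have [e [He [Hex _]]] := charv2 Ht Hg Hgx Hx; exact: H He Hex.
Qed.

Lemma connect_cross (T : finType) (e : rel T) (P : T -> Prop) u v :
  connect e u v -> ~ P u -> P v -> exists x y, e x y /\ ~ P x /\ P y.
Proof.
move/connectP=> [p Hp ->]; elim: p u Hp => [|a p IH] u /=.
  by move=> _ H1 H2.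
move=> /andP [Hua Hp] Hu Hv; case: (classic (P a)) => Ha.
  by exists u, a.
exact: IH Hp Ha Hv.
Qed.

Lemma maxc (S C V : finType) (G : rbgraph S C) (r : V) (par : V -> V)
  (l : V -> {ffun C -> bool}) c k g :
  standing G -> (forall k, ~~ rb_active G k) -> maximal_char G c -> rooted_tree r par -> (forall k, l r k = false) ->
  order_ax r par l -> (forall s, exists x, forall k, l x k = assoc_matrix G s k) ->
  gain r par l c g -> l (par g) k ->
  exists e, loss r par l k e /\ anc par g e.
Proof.
move=> [_ [_ [_ [_ Hid]]]] Hin [_ Hmc] Ht Hr0 H2 Hsp Hg Hpk.
apply: NNPP => H.
have Hgr : g != r by move: Hg; rewrite /gain => /andP [/andP [->]].
have Hgk : l g k.
  apply/negPn/negP => Hn; apply: H; exists g; split; last exact: anc_refl.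
  by rewrite /loss Hgr Hpk.
have [gk [Hgk1 [Hgk2 Hgk3]]] := charv1 Ht (Hr0 k) H2 Hgk.
have Hsub : Sof G c \subset Sof G k.
  apply/subsetP => s; rewrite !inE => Hs.
  have [x Hx] := Hsp s.
  have [g0 [Hg0 [Hg0x _]]] := charv1 Ht (Hr0 c) H2 (etrans (Hx c) Hs).
  rewrite -(gain_uniq H2 Hg Hg0) in Hg0x.
  rewrite -Hx; apply: (charv2' Ht Hgk1 (anc_trans Hgk2 Hg0x)) => e He Hex.
  case: (anc_total Hex Hg0x) => Hc.
    exact: Hgk3 He Hc.
  by apply: H; exists e.
have := Hmc k (Hin k); rewrite properE Hsub /= negbK => Hsup.
have Hck : c = k.
  apply: Hid => s; apply/idP/idP => Hs.
    by have := subsetP Hsub s; rewrite !inE; apply.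
  by have := subsetP Hsup s; rewrite !inE; apply.
subst k; move: Hg Hpk; rewrite /gain => /andP [/andP [_ /negbTE ->]] //.
Qed.

Lemma spec_above (S C V : finType) (G : rbgraph S C) (r : V) (par : V -> V)
  (l : V -> {ffun C -> bool}) c g s11 s00 :
  standing G -> (forall k, ~~ rb_active G k) -> (forall k, maximal_char G k) ->
  rb_connected G -> rooted_tree r par -> (forall k, l r k = false) ->
  order_ax r par l -> (forall s, exists x, forall k, l x k = assoc_matrix G s k) ->
  gain r par l c g -> assoc_matrix G s11 c ->
  (forall x, anc par g x -> ~ (forall k, l x k = assoc_matrix G s00 k)) ->
  exists w, is_species l (assoc_matrix G) w /\ anc par w g /\ w <> g.
Proof.
move=> Hstd Hin Hmax Hconn Ht Hr0 H2 Hsp Hg Hs11 HU.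
have HM : forall s k, assoc_matrix G s k = rb_edge G s k.
  by move=> s k; rewrite /assoc_matrix (negbTE (Hin k)).
pose Pin s := exists x, anc par g x /\ forall k, l x k = assoc_matrix G s k.
pose P (v : S + C) := match v with
  | inl s => Pin s
  | inr k => exists s, Pin s /\ assoc_matrix G s k end.
have HP0 : ~ P (inl s00) by move=> [x [Hx1 Hx2]]; exact: HU Hx1 Hx2.
have HP1 : P (inr c).
  have [x Hx] := Hsp s11.
  have [g0 [Hg0 [Hg0x _]]] := charv1 Ht (Hr0 c) H2 (etrans (Hx c) Hs11).
  rewrite -(gain_uniq H2 Hg Hg0) in Hg0x.
  by exists s11; split => //; exists x.
have [[so|k] [[si|d] [Hadj [HPx HPy]]]] := connect_cross (Hconn _ _) HP0 HP1;
  rewrite /= in Hadj; try done.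
2: by case: HPx; exists si; split => //; rewrite HM.
move: HPy => [si [[xi [Hgxi Hxi]] Hsid]].
have Hsod : assoc_matrix G so d by rewrite HM.
have [y Hy] := Hsp so.
have HyU : ~ anc par g y by move=> H; apply: HPx; exists y.
have [gd [Hgd [Hgdxi _]]] := charv1 Ht (Hr0 d) H2 (etrans (Hxi d) Hsid).
have [gd' [Hgd' [Hgdy _]]] := charv1 Ht (Hr0 d) H2 (etrans (Hy d) Hsod).
rewrite -(gain_uniq H2 Hgd Hgd') in Hgdy.
have Hgdg : anc par gd g.
  case: (anc_total Hgdxi Hgxi) => // H.
  by case: HyU; apply: anc_trans H Hgdy.
have Hgdneg : gd <> g by move=> E; apply: (HyU); rewrite -E.
have [N HN] := anc_root y Ht.
pose Pb i := if excluded_middle_informative (anc par (iter i par y) g) then true else false.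
have PbP : forall i, Pb i <-> anc par (iter i par y) g.
  by move=> i; rewrite /Pb; case: excluded_middle_informative.
have HexP : exists i, Pb i by exists N; apply/PbP; rewrite HN; exact: anc_root.
case: (ex_minnP HexP) => i0 /PbP Hw Hmin.
have {}Hmin : forall j, j < i0 -> ~ anc par (iter j par y) g.
  by move=> j Hj /PbP Hb; have := Hmin j Hb; rewrite leqNgt Hj.
set w := iter i0 par y in Hw.
have Hr : par r = r by case: Ht.
have Hwg : w <> g by move=> E; apply: (HyU); rewrite -E; exact: anc_iter.
have Hsw := anc_sanc Ht Hw Hwg.
have Hgdw : anc par gd w.
  case: Hgdy => m Hm.
  case: (leqP i0 m) => Hm'.
    by rewrite -Hm; exact: anc_iter2 Hm'.
  by case: (Hmin m Hm'); rewrite Hm.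
have Hpgd : l (par g) d.
  apply: (charv2' Ht Hgd).
    by case: (anc_sanc Ht Hgdg Hgdneg).
  move=> e He Hep.
  have := below_loss Ht (Hr0 d) H2 He (anc_trans Hep (anc_trans (anc_par par g) Hgxi)).
  by rewrite Hxi Hsid.
have [ld [Hld Hgld]] := maxc Hstd Hin (Hmax c) Ht Hr0 H2 Hsp Hg Hpgd.
have NotU : forall j x, j < i0 -> anc par (iter j par y) x -> anc par g x -> False.
  move=> j x Hj Hzx Hgx; case: (anc_total Hzx Hgx) => H.
    exact: Hmin j Hj H.
  by apply: (HyU); apply: (anc_trans H); exact: anc_iter.
have NoGain : forall j k, j < i0 -> ~ gain r par l k (iter j par y).
  move=> j k Hj Hgk.
  have Hwz : anc par w (iter j par y) by apply: anc_iter2; apply: ltnW.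
  have Hsub : Sof G k \subset Sof G d.
    apply/subsetP => s; rewrite !inE => Hs.
    have [x Hx] := Hsp s.
    have [gk [Hgk' [Hgkx _]]] := charv1 Ht (Hr0 k) H2 (etrans (Hx k) Hs).
    rewrite -(gain_uniq H2 Hgk Hgk') in Hgkx.
    rewrite -Hx; apply: (charv2' Ht Hgd (anc_trans Hgdw (anc_trans Hwz Hgkx))) => e He Hex.
    rewrite (loss_uniq H2 He Hld) in Hex.
    case: (anc_total Hex Hgkx) => H.
      have := below_loss Ht (Hr0 d) H2 Hld (anc_trans H (@anc_iter _ par j y)).
      by rewrite Hy Hsod.
    exact: NotU j ld Hj H Hgld.
  have Hnsup : ~~ (Sof G d \subset Sof G k).
    apply/negP => /subsetP H; have := H si; rewrite !inE Hsid => /(_ isT) Hk.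
    have [gk [Hgk' [Hgkx _]]] := charv1 Ht (Hr0 k) H2 (etrans (Hxi k) Hk).
    rewrite -(gain_uniq H2 Hgk Hgk') in Hgkx.
    exact: NotU j xi Hj Hgkx Hgxi.
  case: (Hmax k) => _ Hmk.
  by move: (Hmk d (Hin d)); rewrite properE Hsub Hnsup.
have Hlw : forall k, l w k = l y k.
  move=> k; apply/eqP/negPn/negP => Hne.
  have [j [Hj [Hch Hlz]]] := first_change Hr Hne.
  case Hyk : (l y k) in Hlz.
    by apply: (NoGain j k Hj); apply: changes_gain => //; rewrite Hlz.
  have Hloss : loss r par l k (iter j par y) by apply: changes_loss => //; rewrite Hlz.
  have Hpz : l (par (iter j par y)) k by move: Hloss; rewrite /loss => /andP [/andP [_ ->]].
  have [gk [Hgk [Hgkp _]]] := charv1 Ht (Hr0 k) H2 Hpz.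
  case: Hgkp => m Hm.
  have Hm2 : iter (m + j.+1) par y = gk by rewrite iterD iterS.
  case: (ltnP (m + j.+1) i0) => Hmi.
    by apply: (NoGain _ k Hmi); rewrite Hm2.
  have Hgkw : anc par gk w by rewrite -Hm2; apply: anc_iter2.
  have Hpk : l (par g) k.
    apply: (charv2' Ht Hgk (anc_trans Hgkw (proj2 Hsw))) => e He Hep.
    rewrite (loss_uniq H2 He Hloss) in Hep.
    exact: Hmin j Hj (anc_trans Hep (anc_par par g)).
  have [lk [Hlk Hglk]] := maxc Hstd Hin (Hmax c) Ht Hr0 H2 Hsp Hg Hpk.
  rewrite (loss_uniq H2 Hlk Hloss) in Hglk.
  by apply: (HyU); apply: (anc_trans Hglk); exact: anc_iter.
exists w; split; last by [].
by exists so => k; rewrite Hlw; exact: Hy k.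
Qed.

Definition concl1 (S C V : finType) (G : rbgraph S C)
  (r : V) (par : V -> V) (l : V -> {ffun C -> bool}) (c c' : C) : Prop :=
  (exists x1 x2 x3,
     [/\ gain r par l c x1, gain r par l c' x2, loss r par l c x3,
         sanc r par x1 x2 & sanc r par x2 x3] /\
     ((forall y, ~~ loss r par l c' y) \/
      exists x4, loss r par l c' x4 /\ sanc r par x3 x4)).

Definition concl3 (S C V : finType) (G : rbgraph S C)
  (r : V) (par : V -> V) (l : V -> {ffun C -> bool}) (c c' : C) : Prop :=
  ((exists x3 x4, [/\ loss r par l c x3, loss r par l c' x4,
                     ~ anc par x3 x4 & ~ anc par x4 x3]) /\
   (conflicting G c c' ->
      exists z, is_species l (assoc_matrix G) z /\
        forall x1 x2, gain r par l c x1 -> gain r par l c' x2 ->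
          sanc r par z x1 /\ sanc r par z x2)).

Lemma case_main (S C V : finType) (G : rbgraph S C) (r : V) (par : V -> V)
  (l : V -> {ffun C -> bool}) c c' g g' x11 x10 x01 s11 :
  standing G -> (forall k, ~~ rb_active G k) -> (forall k, maximal_char G k) ->
  rb_connected G -> rooted_tree r par -> (forall k, l r k = false) ->
  order_ax r par l -> (forall s, exists x, forall k, l x k = assoc_matrix G s k) ->
  gain r par l c g -> gain r par l c' g' -> anc par g g' ->
  (forall k, l x11 k = assoc_matrix G s11 k) ->
  l x11 c -> l x11 c' -> l x10 c -> ~~ l x10 c' -> ~~ l x01 c -> l x01 c' ->
  concl1 G r par l c c' \/ concl3 G r par l c c'.
Proof.
move=> Hstd Hin Hmax Hconn Ht Hr0 H2 Hsp Hg Hg' Hgg' Hx11 H11c H11c' H10c H10c' H01c H01c'.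
have [g1 [Hg1 [Hg'01 Hnl01c']]] := charv1 Ht (Hr0 c') H2 H01c'.
rewrite -(gain_uniq H2 Hg' Hg1) in Hg'01.
have [e [He [Hex01 Hge]]] := charv2 Ht Hg (anc_trans Hgg' Hg'01) H01c.
have [g2 [Hg2 [Hg11 Hnl11c]]] := charv1 Ht (Hr0 c) H2 H11c.
rewrite -(gain_uniq H2 Hg Hg2) in Hg11.
have [g3 [Hg3 [Hg'11 Hnl11c']]] := charv1 Ht (Hr0 c') H2 H11c'.
rewrite -(gain_uniq H2 Hg' Hg3) in Hg'11.
have Hneg'e : ~ anc par e g'.
  by move=> H; apply: (Hnl11c e He); apply: anc_trans H Hg'11.
have Hg'e : anc par g' e.
  by case: (anc_total Hex01 Hg'01) => // H; case: Hneg'e.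
have Hsg'e : sanc r par g' e.
  by apply: anc_sanc Ht Hg'e _ => E; apply: Hneg'e; rewrite E; exact: anc_refl.
have [g4 [Hg4 [Hg10 _]]] := charv1 Ht (Hr0 c) H2 H10c.
rewrite -(gain_uniq H2 Hg Hg4) in Hg10.
case: (classic (exists f, loss r par l c' f)) => [[f Hf]|Hnf].
  case: (classic (anc par f e)) => Hfe.
    by case: (Hnl01c' f Hf (anc_trans Hfe Hex01)).
  case: (classic (anc par e f)) => Hef.
    case: (eqVneq g g') => Hgg.
      subst g'.
      have [f' [Hf' [Hf'x _]]] := charv2 Ht Hg' Hg10 H10c'.
      rewrite (loss_uniq H2 Hf' Hf) in Hf'x.
      have := below_loss Ht (Hr0 c) H2 He (anc_trans Hef Hf'x).
      by move: H10c => /[swap] ->.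
    left; exists g, g', e; split.
      by split => //; apply: anc_sanc => //; apply/eqP.
    right; exists f; split => //; apply: anc_sanc => // E.
    by apply: Hfe; rewrite E; exact: anc_refl.
  right; split; first by exists e, f; split.
  move=> Hconf; have [s00 [Hs00c Hs00c']] := Hconf false false.
  have HU : forall x, anc par g x -> ~ (forall k, l x k = assoc_matrix G s00 k).
    move=> x Hgx Hx.
    have Hxc : ~~ l x c by rewrite Hx Hs00c.
    have Hxc' : ~~ l x c' by rewrite Hx Hs00c'.
    have [e' [He' [He'x _]]] := charv2 Ht Hg Hgx Hxc.
    rewrite (loss_uniq H2 He' He) in He'x.
    have [f' [Hf' [Hf'x _]]] := charv2 Ht Hg' (anc_trans Hg'e He'x) Hxc'.
    rewrite (loss_uniq H2 Hf' Hf) in Hf'x.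
    by case: (anc_total He'x Hf'x).
  have Hs11c : assoc_matrix G s11 c by rewrite -Hx11.
  have [w [Hws [Hwg Hwne]]] :=
    spec_above Hstd Hin Hmax Hconn Ht Hr0 H2 Hsp Hg Hs11c HU.
  exists w; split => // x1 x2 Hx1 Hx2.
  rewrite -(gain_uniq H2 Hg Hx1) -(gain_uniq H2 Hg' Hx2).
  split; first exact: anc_sanc.
  apply: anc_sanc => //; first exact: anc_trans Hwg Hgg'.
  move=> E; subst w; apply: Hwne; exact: anc_antisym Ht Hwg Hgg'.
case: (eqVneq g g') => Hgg.
  subst g'.
  have [f' [Hf' _]] := charv2 Ht Hg' Hg10 H10c'.
  by case: Hnf; exists f'.
left; exists g, g', e; split.
  by split => //; apply: anc_sanc => //; apply/eqP.
by left => y; apply/negP => Hy; apply: Hnf; exists y.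
Qed.

Theorem lemma4 (S C V : finType) (G : rbgraph S C)
  (r : V) (par : V -> V) (l : V -> {ffun C -> bool}) (c c' : C) :
  standing G ->
  maximal_reducible G ->
  solves G r par l ->
  overlapping G c c' ->
  occurs r par l c -> occurs r par l c' ->
  ~~ rb_active G c -> ~~ rb_active G c' ->
  (* (1) c+, c'+, c-, c'- in this order on a root-to-leaf path, c'- possibly missing *)
  (exists x1 x2 x3,
     [/\ gain r par l c x1, gain r par l c' x2, loss r par l c x3,
         sanc r par x1 x2 & sanc r par x2 x3] /\
     ((forall y, ~~ loss r par l c' y) \/
      exists x4, loss r par l c' x4 /\ sanc r par x3 x4))
  \/
  (* (2) c'+, c+, c'-, c- in this order on a root-to-leaf path, c- possibly missing *)
  (exists x1 x2 x3,
     [/\ gain r par l c' x1, gain r par l c x2, loss r par l c' x3,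
         sanc r par x1 x2 & sanc r par x2 x3] /\
     ((forall y, ~~ loss r par l c y) \/
      exists x4, loss r par l c x4 /\ sanc r par x3 x4))
  \/
  (* (3) c- and c'- on two distinct paths; if conflicting, a species precedes c+ and c'+ *)
  ((exists x3 x4, [/\ loss r par l c x3, loss r par l c' x4,
                     ~ anc par x3 x4 & ~ anc par x4 x3]) /\
   (conflicting G c c' ->
      exists z, is_species l (assoc_matrix G) z /\
        forall x1 x2, gain r par l c x1 -> gain r par l c' x2 ->
          sanc r par z x1 /\ sanc r par z x2)).
Proof.
move=> Hstd [[Hconn _] [Hin Hmax]] Hsol Hov _ _ _ _.
move: Hsol => [Ht [Hroot [_ [H2 Hsp]]]].
have H2' : order_ax r par l := H2.
have Hr0 : forall k, l r k = false.
  by move=> k; rewrite Hroot inE (negbTE (Hin k)).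
case: Hov => /set0Pn [s11 Hs11] [/subsetPn [s10 Hs10a Hs10b] /subsetPn [s01 Hs01a Hs01b]].
move: Hs11 Hs10a Hs10b Hs01a Hs01b; rewrite !inE => /andP [Hs11c Hs11c'] Hs10c Hs10c' Hs01c' Hs01c.
have [x11 Hx11] := Hsp s11.
have [x10 Hx10] := Hsp s10.
have [x01 Hx01] := Hsp s01.
have H11c : l x11 c by rewrite Hx11.
have H11c' : l x11 c' by rewrite Hx11.
have H10c : l x10 c by rewrite Hx10.
have H10c' : ~~ l x10 c' by rewrite Hx10.
have H01c : ~~ l x01 c by rewrite Hx01.
have H01c' : l x01 c' by rewrite Hx01.
have [g [Hg [Hgx _]]] := charv1 Ht (Hr0 c) H2' H11c.
have [g' [Hg' [Hg'x _]]] := charv1 Ht (Hr0 c') H2' H11c'.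
case: (anc_total Hgx Hg'x) => Hgg.
  case: (case_main Hstd Hin Hmax Hconn Ht Hr0 H2' Hsp Hg Hg' Hgg Hx11
          H11c H11c' H10c H10c' H01c H01c') => [H|H].
    by left.
  by right; right.
case: (case_main Hstd Hin Hmax Hconn Ht Hr0 H2' Hsp Hg' Hg Hgg Hx11
        H11c' H11c H01c' H01c H10c' H10c) => [H|[[x3 [x4 [H1 H3 H4 H5]]] H6]].
  by right; left.
right; right; split.
  by exists x4, x3; split.
move=> Hconf.
have Hconf' : conflicting G c' c.
  by move=> b b'; have [s [Hs1 Hs2]] := Hconf b' b; exists s.
have [z [Hz Hz2]] := H6 Hconf'.
exists z; split => // x1 x2 Hx1 Hx2.
by have [] := Hz2 x2 x1 Hx2 Hx1.
Qed.
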